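(* Let $M$ be the allocation output by the online greedy algorithm on an instance of Model 1 and let $N$ be an optimal offline allocation. For each day $d_i\in D$, let $X_i$ be the set of Type 2 agents that $N$ allocates on day $d_i$, and let $Y_i$ be the set of agents that $M$ allocates on day $d_i$. Then $|X_i|\le |Y_i|$.
   Context: Model 1: finite sets of agents $A$, categories $C$ and days $D=\{d_1,\dots,d_T\}$; each agent is eligible for a subset of categories; daily supply $s_i$ for day $d_i$; daily quota $q_{ik}$ for category $c_k$ on day $d_i$; each agent $a_j$ has a priority factor $\alpha_j>0$ and a set of available days; discount factor $\delta\in(0,1)$. An allocation maps each agent to a pair (eligible category, available day) or to $\emptyset$, with at most $q_{ik}$ agents getting $(c_k,d_i)$ and at most $s_i$ agents getting day $d_i$; agent $a_j$ allocated on day $d_i$ has utility $\alpha_j\delta^{i-1}$, and an optimal offline allocation maximizes total utility. The online greedy algorithm: on each day $d_i$, let $A_i$ be the agents available on $d_i$ not yet allocated; form the bipartite graph between $A_i$ and $C$ with an edge $(a_j,c_k)$ when $a_j$ is eligible for $c_k$, of weight $\alpha_j\delta^{i-1}$, agents of capacity $1$ and $c_k$ of capacity $q_{ik}$; compute a maximum-weight $b$-matching of size at most $s_i$ and allocate accordingly on day $d_i$. An agent allocated by $N$ is of Type 1 if $M$ allocates it on a strictly earlier day than $N$ does; every other agent allocated by $N$ is of Type 2. *)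

(* Defs.v *)
From HB Require Import structures.
From mathcomp Require Import all_boot all_order all_algebra.
Set Implicit Arguments. Unset Strict Implicit. Unset Printing Implicit Defensive.
Import Order.TTheory GRing.Theory Num.Theory.
Local Open Scope ring_scope.

(* An instance of Model 1.  Agents A, categories C, days 'I_T
   (day index i : 'I_T stands for d_{i+1}, so its discount is delta^i). *)
Record instance (R : realFieldType) (A C : finType) (T : nat) := Instance {
  elig   : A -> C -> bool;
  supply : 'I_T -> nat;
  quota  : 'I_T -> C -> nat;
  prio   : A -> R;
  avail  : A -> 'I_T -> bool;
  disc   : R
}.

Section Model.
Variables (R : realFieldType) (A C : finType) (T : nat) (I : instance R A C T).

Definition allocation := A -> option (C * 'I_T).

Definition alloc_day (f : allocation) (a : A) : option 'I_T := omap snd (f a).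

Definition feasible (f : allocation) : Prop :=
  [/\ forall a c d, f a = Some (c, d) -> elig I a c && avail I a d,
      forall d c, (#|[set a | f a == Some (c, d)]| <= quota I d c)%N
    & forall d, (#|[set a | alloc_day f a == Some d]| <= supply I d)%N].

Definition utility (f : allocation) : R :=
  \sum_(a : A) match f a with
               | Some (_, d) => prio I a * disc I ^+ d
               | None => 0 end.

Definition optimal (f : allocation) : Prop :=
  feasible f /\ forall g, feasible g -> utility g <= utility f.

Definition remaining (M : allocation) (i : 'I_T) : {set A} :=
  [set a | avail I a i &&
           [forall j : 'I_T, (j < i)%N ==> (alloc_day M a != Some j)]].

(* b-matching on day i between the agent set S (capacity 1) and categories
   (capacity q_{ik}), along eligibility edges, of size at most s_i. *)
Definition bmatching (i : 'I_T) (S : {set A}) (g : A -> option C) : Prop :=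
  [/\ forall a c, g a = Some c -> (a \in S) && elig I a c,
      forall c, (#|[set a | g a == Some c]| <= quota I i c)%N
    & (#|[set a | g a != None]| <= supply I i)%N].

Definition bweight (i : 'I_T) (g : A -> option C) : R :=
  \sum_(a : A) if g a is Some _ then prio I a * disc I ^+ i else 0.

Definition day_part (M : allocation) (i : 'I_T) : A -> option C :=
  fun a => match M a with
           | Some (c, d) => if d == i then Some c else None
           | None => None end.

Definition greedy_output (M : allocation) : Prop :=
  forall i : 'I_T,
    bmatching i (remaining M i) (day_part M i) /\
    forall g, bmatching i (remaining M i) g ->
      bweight i g <= bweight i (day_part M i).

Definition type1 (M N : allocation) (a : A) : bool :=
  match alloc_day M a, alloc_day N a with
  | Some dm, Some dn => (dm < dn)%N
  | _, _ => false end.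

Definition type2 (M N : allocation) (a : A) : bool :=
  (alloc_day N a != None) && ~~ type1 M N a.

End Model.

(* Main.v *)
Require Import Defs.
From HB Require Import structures.
From mathcomp Require Import all_boot all_order all_algebra zify.
Import Order.TTheory GRing.Theory Num.Theory.
Local Open Scope ring_scope.

Lemma card_setE (T : finType) (P : pred T) : #|[set x | P x]| = (\sum_x (P x : nat))%N.
Proof. rewrite -sum1_card big_mkcond; apply eq_bigr => x _; rewrite inE; by case: (P x). Qed.

Lemma card_match (A C : finType) (g : A -> option C) :
  #|[set a | g a != None]| = (\sum_c #|[set a | g a == Some c]|)%N.
Proof.
rewrite card_setE.
under [RHS]eq_bigr => c _ do rewrite card_setE.
rewrite exchange_big /=; apply eq_bigr => a _.
case E: (g a) => [c0|] /=.
  rewrite (bigD1 c0) //= eqxx big1 // => c ne.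
  by case: eqP => // -[] e; rewrite e eqxx in ne.
by rewrite big1.
Qed.

Lemma aug (A C : finType) (S : {set A}) (el : A -> C -> bool) (q : C -> nat)
  (g : A -> option C) :
  (forall a c, g a = Some c -> (a \in S) && el a c) ->
  (forall c, (#|[set a | g a == Some c]| <= q c)%N) ->
  forall n (h : A -> option C),
  (#|[set a | g a != h a]| < n)%N ->
  (forall a c, h a = Some c -> (a \in S) && el a c) ->
  (forall c, (#|[set a | h a == Some c]| <= q c)%N) ->
  (#|[set a | h a != None]| < #|[set a | g a != None]|)%N ->
  exists h' b, [/\ (forall a c, h' a = Some c -> (a \in S) && el a c),
     (forall c, (#|[set a | h' a == Some c]| <= q c)%N),
     h b = None, h' b != None &
     forall a, a != b -> (h' a != None) = (h a != None)].
Proof.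
move=> gS gq n; elim: n => [|n IH] h // hD hS hq hlt.
have [c hc] : exists c, (#|[set a | h a == Some c]| < #|[set a | g a == Some c]|)%N.
  apply/existsP; apply/contraT; rewrite negb_exists => /forallP H.
  have : (\sum_c #|[set a | g a == Some c]| <= \sum_c #|[set a | h a == Some c]|)%N.
    by apply: leq_sum => c _; rewrite leqNgt H.
  by rewrite -!card_match leqNgt hlt.
have [sub|/subsetPn [a ag ah]] := boolP ([set a | g a == Some c] \subset [set a | h a == Some c]).
  by move: (subset_leq_card sub); lia.
move: ag ah; rewrite !inE => /eqP ga hac.
pose h1 := fun x => if x == a then Some c else h x.
have h1S : forall x c0, h1 x = Some c0 -> (x \in S) && el x c0.
  move=> x c0; rewrite /h1; case: eqP => [-> [<-]|_]; [exact: gS | exact: hS].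
have h1q : forall c0, (#|[set x | h1 x == Some c0]| <= q c0)%N.
  move=> c0; have [->|ne] := eqVneq c0 c.
    apply: leq_trans (gq c).
    apply: leq_trans hc.
    have -> : [set x | h1 x == Some c] = a |: [set x | h x == Some c].
      apply/setP => x; rewrite !inE /h1; case: (eqVneq x a) => [->|xa] /=.
        by rewrite !eqxx.
      by [].
    by rewrite cardsU1 inE hac.
  apply: leq_trans (hq c0); apply: subset_leq_card; apply/subsetP => x.
  rewrite !inE /h1; case: (eqVneq x a) => [_ /eqP [] E|_ //]; by rewrite E eqxx in ne.
case E: (h a) => [c'|].
- have nn : (#|[set x | g x != h1 x]| < n)%N.
    suff : (#|[set x | g x != h1 x]| < #|[set x | g x != h x]|)%N by move: hD; lia.
    apply: proper_card; apply/properP; split.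
      apply/subsetP => x; rewrite !inE /h1; case: (eqVneq x a) => [->|//]; by rewrite ga eqxx.
    exists a; rewrite !inE /h1 /=.
      by rewrite ga E; apply/eqP => -[] ce; rewrite E -ce eqxx in hac.
    by rewrite eqxx ga eqxx.
  have same : [set x | h1 x != None] = [set x | h x != None].
    by apply/setP => x; rewrite !inE /h1; case: (eqVneq x a) => [->|//]; rewrite E.
  have [h' [b [h'S h'q h1b h'b h'o]]] := IH h1 nn h1S h1q ltac:(by rewrite same).
  have ba : b != a by apply/eqP => ba; move: h1b; rewrite /h1 ba eqxx.
  exists h', b; split => //.
    by move: h1b; rewrite /h1 (negbTE ba).
  move=> x xb; rewrite h'o // /h1; case: (eqVneq x a) => [->|//]; by rewrite E.
- exists h1, a; split => //; first by rewrite /h1 eqxx.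
  by move=> x /negbTE xa; rewrite /h1 xa.
Qed.

Lemma bweight_lt (R : realFieldType) (A C : finType) (T : nat)
  (I : instance R A C T) (i : 'I_T) (h h' : A -> option C) (b : A) :
  (forall a, 0 < prio I a) -> 0 < disc I ->
  h b = None -> h' b != None ->
  (forall a, a != b -> (h' a != None) = (h a != None)) ->
  bweight I i h < bweight I i h'.
Proof.
move=> pp d0 hb h'b ho; rewrite /bweight (bigD1 b) //= [X in _ < X](bigD1 b) //= hb add0r.
have -> : \sum_(a | a != b) (if h' a is Some _ then prio I a * disc I ^+ i else 0)
        = \sum_(a | a != b) (if h a is Some _ then prio I a * disc I ^+ i else 0).
  apply: eq_bigr => a /ho; by case: (h' a); case: (h a).
case: (h' b) h'b => // _ _.
by rewrite ltrDr mulr_gt0 // exprn_gt0.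
Qed.

Theorem lemma2 (R : realFieldType) (A C : finType) (T : nat)
  (I : instance R A C T) (M N : @allocation A C T) (i : 'I_T) :
  (forall a, 0 < prio I a) -> 0 < disc I < 1 ->
  greedy_output I M -> optimal I N ->
  (#|[set a | type2 M N a && (alloc_day N a == Some i)]|
     <= #|[set a | alloc_day M a == Some i]|)%N.
Proof.
move=> pp /andP[d0 _] Mg [[Nel Nq Ns] _].
have [[hS hq hs] hmax] := Mg i.
set h := day_part M i in hS hq hs hmax.
pose P a := type2 M N a && (alloc_day N a == Some i).
pose g := fun a => if P a then omap fst (N a) else None.
have hY : [set a | h a != None] = [set a | alloc_day M a == Some i].
  apply/setP => a; rewrite !inE /h /day_part /alloc_day.
  case: (M a) => [[c d]|] //=.
  case: (eqVneq d i) => [->|ne] /=; first by rewrite !eqxx.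
  by apply/esym/eqP => -[] e; rewrite e eqxx in ne.
have gX : [set a | g a != None] = [set a | P a].
  apply/setP => a; rewrite !inE /g; case Pa: (P a) => //.
  move: Pa; rewrite /P /alloc_day => /andP[_]; by case: (N a) => [[c d]|].
have gN : forall a c, g a = Some c -> P a /\ N a = Some (c, i).
  move=> a c; rewrite /g; case Pa: (P a) => //; split => //.
  move: Pa H; rewrite /P /alloc_day => /andP[_]; case: (N a) => [[c' d]|] //=.
  by move=> /eqP [->] [->].
have gS : forall a c, g a = Some c -> (a \in remaining I M i) && elig I a c.
  move=> a c /gN [Pa Na]; have /andP[el av] := Nel _ _ _ Na.
  rewrite el andbT inE av /=; apply/forallP => j; apply/implyP => ji.
  apply/eqP => Mj; move: Pa; rewrite /P /type2 /type1 Mj /alloc_day Na /=.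
  by rewrite ji.
have gq : forall c, (#|[set a | g a == Some c]| <= quota I i c)%N.
  move=> c; apply: leq_trans (Nq i c); apply: subset_leq_card; apply/subsetP => a.
  by rewrite !inE => /eqP /gN [_ ->].
rewrite leqNgt; apply/negP => lt.
have hlt : (#|[set a | h a != None]| < #|[set a | g a != None]|)%N by rewrite hY gX.
have [h' [b [h'S h'q hb h'b h'o]]] :=
  @aug _ _ _ _ _ _ gS gq _ _ (ltnSn #|[set a | g a != h a]|) hS hq hlt.
have h'm : bmatching I i (remaining I M i) h'.
  split => //.
  have -> : [set a | h' a != None] = b |: [set a | h a != None].
    apply/setP => a; rewrite !inE; case: (eqVneq a b) => [->|ab] /=; first by rewrite h'b.
    exact: h'o.
  rewrite cardsU1 inE hb /=.
  apply: (leq_trans hlt); apply: leq_trans (Ns i); rewrite gX.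
  apply: subset_leq_card; apply/subsetP => a; by rewrite !inE => /andP[].
have := hmax _ h'm; rewrite leNgt => /negP H; apply: H.
exact: (@bweight_lt _ _ _ _ I i h h' b pp d0 hb h'b h'o).
Qed.
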